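(* There exists no undirected graph $G=(V,E)$ for which there is a set $B=\{((u_i,v_i),x_i): 1\le i\le4\}\subseteq\mathcal{D}\times[0,1]$ that is shattered by $\mathcal{F}^+=\{R_w: w\in V\}$ and such that there are at least three distinct indices $j',j'',j'''\in\{1,2,3,4\}$ with $\sigma_{u_{j'}v_{j'}}=\sigma_{u_{j''}v_{j''}}=\sigma_{u_{j'''}v_{j'''}}=1$.
   Context: $\mathcal{D}=\{(u,v)\in V\times V: u\ne v\}$. $\sigma_{uv}$ is the number of shortest paths from $u$ to $v$, $\sigma_{uv}(w)$ the number of those to which $w$ is internal ($w\ne u,v$, path through $w$); $f_w(u,v)=\sigma_{uv}(w)/\sigma_{uv}$ ($0$ if $\sigma_{uv}=0$). For $w\in V$, $R_w=\{((u,v),x)\in\mathcal{D}\times[0,1]: x\le f_w(u,v)\}$. A set $B$ is shattered by $\mathcal{F}^+$ if $\{R\cap B: R\in\mathcal{F}^+\}$ equals the power set of $B$. *)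

(* Defs.v *)
From mathcomp Require Import all_boot all_order all_algebra.
From mathcomp Require Import classical_sets reals.
Set Implicit Arguments. Unset Strict Implicit. Unset Printing Implicit Defensive.
Import Order.TTheory GRing.Theory Num.Theory.
Local Open Scope ring_scope.
Local Open Scope classical_set_scope.

(* An undirected graph on a finite vertex type V is given by an edge relation
   e : rel V that is symmetric and irreflexive (checked in the theorem). *)

Section Graph.
Variables (V : finType) (e : rel V).

Definition walks (k : nat) (u v : V) : {set (k.+1).-tuple V} :=
  [set t : (k.+1).-tuple V | [&& thead t == u,
                               path e (thead t) (behead t) &
                               last (thead t) (behead t) == v]].

Definition reach_in (k : nat) (u v : V) : bool := (0 < #|walks k u v|)%N.

Definition is_dist (k : nat) (u v : V) : bool :=
  reach_in k u v && [forall j : 'I_k, ~~ reach_in j u v].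

(* sigma u v = number of shortest paths from u to v (0 if v unreachable).
   A shortest walk has at most #|V| vertices, hence length < #|V|. *)
Definition sigma (u v : V) : nat :=
  \sum_(k < #|V|) (if is_dist k u v then #|walks k u v| else 0%N).

Definition sigma_through (w u v : V) : nat :=
  \sum_(k < #|V|) (if is_dist k u v then
       #|[set t in walks k u v | [&& w != u, w != v & w \in (t : seq V)]]|
     else 0%N).

Definition fw (R : realType) (w u v : V) : R :=
  if sigma u v == 0%N then 0 else (sigma_through w u v)%:R / (sigma u v)%:R.

Definition Rw (R : realType) (w : V) : set ((V * V) * R) :=
  [set p | p.1.1 != p.1.2 /\ 0 <= p.2 <= 1 /\ p.2 <= fw R w p.1.1 p.1.2].

Definition Fplus (R : realType) : set (set ((V * V) * R)) := range (@Rw R).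

End Graph.

Definition shattered (T : Type) (F : set (set T)) (B : set T) : Prop :=
  [set R `&` B | R in F] = [set A | A `<=` B].

(* Main.v *)
Require Import Defs.
From mathcomp Require Import all_boot all_order all_algebra.
From mathcomp Require Import zify.
Set Implicit Arguments. Unset Strict Implicit. Unset Printing Implicit Defensive.

Section Core.
Variables (V : eqType) (e : rel V).
Hypothesis e_sym : symmetric e.

Definition wlk x p y := path e x p && (last x p == y).
Definition D n x y := (exists p, wlk x p y /\ size p = n) /\ (forall p, wlk x p y -> n <= size p).
Definition pt (x : V) p i := last x (take i p).

Lemma D_fun n m x y : D n x y -> D m x y -> n = m.
Proof.
move=> [[p [Hp <-]] Hn] [[q [Hq <-]] Hm]; apply/eqP; rewrite eqn_leq.
by rewrite Hn // Hm.
Qed.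

Lemma rev_vert (x : V) p : rev (x :: p) = last x p :: rev (belast x p).
Proof. by rewrite lastI rev_rcons. Qed.

Lemma wlk_rev x p y : wlk x p y -> wlk y (rev (belast x p)) x.
Proof.
rewrite /wlk => /andP [Hp /eqP <-]; apply/andP; split.
  rewrite rev_path (@eq_path _ _ e) // => a b /=; exact: e_sym.
have := congr1 (last x) (rev_vert x p); rewrite rev_cons last_rcons /= => <-.
by [].
Qed.

Lemma D_sym n x y : D n x y -> D n y x.
Proof.
move=> [[p [Hp Hs]] Hm]; split.
  exists (rev (belast x p)); split; first exact: wlk_rev.
  by rewrite size_rev size_belast.
move=> q Hq; have := Hm _ (wlk_rev Hq); by rewrite size_rev size_belast.
Qed.

Lemma D0 x : D 0 x x.
Proof. by split=> //; exists [::]; rewrite /wlk /= eqxx. Qed.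

Lemma pt_mem x p i : pt x p i \in x :: p.
Proof.
rewrite /pt; have := mem_last x (take i p); rewrite !inE => /orP [->//|H].
by rewrite (mem_take H) orbT.
Qed.

Lemma mem_pt x p z : z \in x :: p -> exists2 i, i <= size p & z = pt x p i.
Proof.
elim: p x => [|a p IH] x; rewrite inE.
  by move/eqP->; exists 0.
case/orP=> [/eqP->|]; first by exists 0.
move/IH=> [i Hi ->]; exists i.+1 => //.
Qed.

Lemma pt0 (x : V) p : pt x p 0 = x. Proof. by rewrite /pt take0. Qed.
Lemma pt_size x p y : wlk x p y -> pt x p (size p) = y.
Proof. by rewrite /wlk /pt take_size => /andP [_ /eqP]. Qed.

Lemma pt_shift x p i l : last (pt x p i) (take l (drop i p)) = pt x p (i + l).
Proof. by rewrite /pt -last_cat -takeD. Qed.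

Lemma wlk_split x p y i : wlk x p y -> i <= size p ->
  wlk x (take i p) (pt x p i) /\ wlk (pt x p i) (drop i p) y.
Proof.
rewrite /wlk => /andP [Hp Hl] Hi.
move: Hp Hl; rewrite -{1 2}(cat_take_drop i p) cat_path last_cat => /andP [-> ->] ->.
by rewrite eqxx.
Qed.

Lemma wlk_seg x p y i j : wlk x p y -> i <= j <= size p ->
  wlk (pt x p i) (take (j - i) (drop i p)) (pt x p j).
Proof.
move=> W /andP [Hij Hj].
have [_ /andP [H1 _]] := wlk_split W (leq_trans Hij Hj).
rewrite /wlk pt_shift subnKC //; rewrite eqxx andbT.
by move: H1; rewrite -{1}(cat_take_drop (j - i) (drop i p)) cat_path => /andP [].
Qed.

Lemma seg_mem x p i j z : i <= j <= size p ->
  z \in pt x p i :: take (j - i) (drop i p) -> exists2 l, i <= l <= j & z = pt x p l.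
Proof.
move=> /andP [Hij Hj] /mem_pt [l Hl ->].
have Hl' : l <= j - i by move: Hl; rewrite size_take; case: ifP; lia.
rewrite /pt (take_takel _ Hl') -/(pt x p i) pt_shift.
exists (i + l) => //; lia.
Qed.

Lemma wlk_splice x p y i j q : wlk x p y -> i <= j <= size p ->
  wlk (pt x p i) q (pt x p j) -> wlk x (take i p ++ q ++ drop j p) y.
Proof.
move=> W /andP [Hij Hj] /andP [Hq /eqP Hlq].
have [/andP [H1 /eqP L1] _] := wlk_split W (leq_trans Hij Hj).
have [_ /andP [H2 /eqP L2]] := wlk_split W Hj.
rewrite /wlk cat_path last_cat cat_path last_cat H1 L1 Hq Hlq H2 L2 eqxx.
by [].
Qed.

Definition Geo x p y := [/\ wlk x p y, (forall q, wlk x q y -> size p <= size q)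
  & (forall q, wlk x q y -> size q = size p -> q = p)].

Lemma geo_D x p y i j : Geo x p y -> i <= j <= size p -> D (j - i) (pt x p i) (pt x p j).
Proof.
move=> [W M U] /andP [Hij Hj]; split.
  exists (take (j - i) (drop i p)); split; first by apply: (wlk_seg W); rewrite Hij.
  by rewrite size_takel // size_drop; lia.
move=> q Hq; have := M _ (wlk_splice W (introT andP (conj Hij Hj)) Hq).
rewrite !size_cat size_takel ?size_drop; lia.
Qed.

Definition ad (m n : nat) := (m - n) + (n - m).

Lemma geo_D' x p y i j : Geo x p y -> i <= size p -> j <= size p ->
  D (ad i j) (pt x p i) (pt x p j).
Proof.
move=> G Hi Hj; case: (leqP i j) => H.
  have -> : ad i j = j - i by rewrite /ad; lia.
  by apply: (geo_D G); rewrite H.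
have -> : ad i j = i - j by rewrite /ad; lia.
by apply: D_sym; apply: (geo_D G); rewrite Hi ltnW.
Qed.

Lemma geo_seg_uniq x p y i j q : Geo x p y -> i <= j <= size p ->
  wlk (pt x p i) q (pt x p j) -> size q = j - i ->
  forall m, i <= m <= j -> pt x p m \in pt x p i :: q.
Proof.
move=> [W M U] /andP [Hij Hj] Hq Hs m /andP [Him Hmj].
have E := U _ (wlk_splice W (introT andP (conj Hij Hj)) Hq).
have E2 : q = take (j - i) (drop i p).
  rewrite -E; last by rewrite !size_cat size_takel ?size_drop ?Hs; lia.
  rewrite drop_size_cat ?size_takel //; last lia.
  by rewrite take_size_cat.
have -> : m = i + (m - i) by lia.
rewrite -pt_shift -(take_takel _ (_ : m - i <= j - i)) -?E2; last lia.
have := mem_last (pt x p i) (take (m - i) q); rewrite !inE => /orP [->//|H].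
by rewrite (mem_take H) orbT.
Qed.

Definition intl (x : V) p y z := [&& z != x, z != y & z \in x :: p].

Lemma intl_pos x p y z : wlk x p y -> intl x p y z -> exists l, [/\ 0 < l, l < size p & z = pt x p l].
Proof.
move=> W /and3P [Hx Hy /mem_pt [l Hl Ez]]; exists l; split => //.
  by case: l Hl Ez => // _ E; rewrite E pt0 eqxx in Hx.
rewrite ltn_neqAle Hl andbT; apply/eqP=> El; move: Ez; rewrite El (pt_size W) => Ez.
by rewrite Ez eqxx in Hy.
Qed.

Lemma pos_intl x p y l : Geo x p y -> 0 < l < size p -> intl x p y (pt x p l).
Proof.
move=> G /andP [H0 H1]; have [W _ _] := G; rewrite /intl pt_mem andbT.
apply/andP; split; apply/eqP => E.
  have := geo_D G (_ : 0 <= l <= size p); rewrite subn0 pt0 E => /(_ (ltnW H1)) D1.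
  by have := D_fun D1 (D0 x); lia.
have := geo_D G (_ : l <= size p <= size p); rewrite (pt_size W) E.
move=> /(_ (introT andP (conj (ltnW H1) (leqnn _)))) D1.
by have := D_fun D1 (D0 y); lia.
Qed.

Lemma interval x p y x1 p1 y1 i j m : Geo x p y -> Geo x1 p1 y1 ->
  i <= m <= j -> j <= size p -> intl x1 p1 y1 (pt x p i) -> intl x1 p1 y1 (pt x p j) ->
  intl x1 p1 y1 (pt x p m).
Proof.
move=> G G1 /andP [Him Hmj] Hj Ii Ij.
have [W _ _] := G; have [W1 _ _] := G1.
have [i' [Hi'0 Hi'1 Ei]] := intl_pos W1 Ii.
have [j' [Hj'0 Hj'1 Ej]] := intl_pos W1 Ij.
have Dq := geo_D' G1 (ltnW Hi'1) (ltnW Hj'1).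
have Dp := geo_D G (_ : i <= j <= size p).
rewrite -Ei -Ej in Dq.
have Eij := D_fun Dq (Dp (introT andP (conj (leq_trans Him Hmj) Hj))).
have [r [Wr Sr Mr]] : exists r, [/\ wlk (pt x p i) r (pt x p j), size r = j - i &
     forall z, z \in pt x p i :: r -> exists2 l, 0 < l < size p1 & z = pt x1 p1 l].
  case: (leqP i' j') => Hij'.
  - exists (take (j' - i') (drop i' p1)); split.
    + by rewrite Ei Ej; apply: (wlk_seg W1); rewrite Hij' ltnW.
    + by rewrite size_takel ?size_drop -?Eij /ad; lia.
    + move=> z; rewrite Ei => /seg_mem [|l Hl ->]; first by rewrite Hij' ltnW.
      exists l => //; lia.
  - set s := take (i' - j') (drop j' p1).
    have Ws : wlk (pt x1 p1 j') s (pt x1 p1 i') by apply: (wlk_seg W1); rewrite ltnW // ltnW.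
    exists (rev (belast (pt x1 p1 j') s)); split.
    + by rewrite Ei Ej; apply: wlk_rev.
    + by rewrite size_rev size_belast size_takel ?size_drop -?Eij /ad; lia.
    + have Ls : last (pt x1 p1 j') s = pt x1 p1 i' by case/andP: Ws => _ /eqP.
      move=> z; rewrite Ei -{1}Ls -rev_vert mem_rev.
      move=> /seg_mem [|l Hl ->]; first by rewrite ltnW // ltnW.
      exists l => //; lia.
have := geo_seg_uniq G (introT andP (conj (leq_trans Him Hmj) Hj)) Wr Sr.
move=> /(_ m (introT andP (conj Him Hmj))) /Mr [l Hl ->].
exact: pos_intl.
Qed.


Definition side (z w w' : V) := exists n1 n2 n3,
  [/\ D n1 z w', D n2 z w, D n3 w w' & n1 = n2 + n3].

Lemma side_pos x p y a b c : Geo x p y -> a <= size p -> b <= size p -> c <= size p ->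
  side (pt x p a) (pt x p b) (pt x p c) <-> ad a c = ad a b + ad b c.
Proof.
move=> G Ha Hb Hc; split.
  move=> [n1 [n2 [n3 [D1 D2 D3 E]]]].
  by rewrite (D_fun (geo_D' G Ha Hc) D1) (D_fun (geo_D' G Ha Hb) D2) (D_fun (geo_D' G Hb Hc) D3).
move=> E; exists (ad a c), (ad a b), (ad b c); by split => //; apply: (geo_D' G).
Qed.

Lemma core_one x p y x1 p1 y1 x2 p2 y2 w w' a b :
  Geo x p y -> Geo x1 p1 y1 -> Geo x2 p2 y2 -> w != w' ->
  intl x p y w -> intl x p y w' -> intl x1 p1 y1 w -> intl x1 p1 y1 w' ->
  intl x2 p2 y2 w -> intl x2 p2 y2 w' ->
  intl x p y a -> intl x1 p1 y1 a -> ~~ intl x2 p2 y2 a ->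
  intl x p y b -> intl x2 p2 y2 b -> ~~ intl x1 p1 y1 b ->
  (side a w w' <-> ~ side b w w').
Proof.
move=> G G1 G2 ww' Iw Iw' Iw1 Iw'1 Iw2 Iw'2 Ia Ia1 Na2 Ib Ib2 Nb1.
have [W _ _] := G.
have [pw [_ Hw Ew]] := intl_pos W Iw.
have [pw' [_ Hw' Ew']] := intl_pos W Iw'.
have [pa [_ Ha Ea]] := intl_pos W Ia.
have [pb [_ Hb Eb]] := intl_pos W Ib.
subst w w' a b.
have Hne : pw != pw' by apply/eqP => E; move: ww'; rewrite E eqxx.
have F2 : forall i j m, i <= m <= j -> j <= size p ->
   intl x2 p2 y2 (pt x p i) -> intl x2 p2 y2 (pt x p j) -> intl x2 p2 y2 (pt x p m).
  by move=> i j m; apply: (interval G G2).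
have F1 : forall i j m, i <= m <= j -> j <= size p ->
   intl x1 p1 y1 (pt x p i) -> intl x1 p1 y1 (pt x p j) -> intl x1 p1 y1 (pt x p m).
  by move=> i j m; apply: (interval G G1).
have H1 : ~ (pw <= pa <= pw' \/ pw' <= pa <= pw).
  case=> H; move/negP: Na2; apply.
    by apply: (F2 pw pw') => //; exact: ltnW.
  by apply: (F2 pw' pw) => //; exact: ltnW.
have H2 : ~ (pw <= pb <= pw' \/ pw' <= pb <= pw).
  case=> H; move/negP: Nb1; apply.
    by apply: (F1 pw pw') => //; exact: ltnW.
  by apply: (F1 pw' pw) => //; exact: ltnW.
have H3 : ~ (pb <= pa <= pw \/ pw <= pa <= pb).
  case=> H; move/negP: Na2; apply.
    by apply: (F2 pb pw) => //; exact: ltnW.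
  by apply: (F2 pw pb) => //; exact: ltnW.
have H4 : ~ (pa <= pb <= pw \/ pw <= pb <= pa).
  case=> H; move/negP: Nb1; apply.
    by apply: (F1 pa pw) => //; exact: ltnW.
  by apply: (F1 pw pa) => //; exact: ltnW.
rewrite !(side_pos G) //; try exact: ltnW.
move: Hne; rewrite /ad; clear -H1 H2 H3 H4; lia.
Qed.

Lemma core x1 p1 y1 x2 p2 y2 x3 p3 y3 w w' a b c :
  Geo x1 p1 y1 -> Geo x2 p2 y2 -> Geo x3 p3 y3 -> w != w' ->
  intl x1 p1 y1 w -> intl x1 p1 y1 w' -> intl x2 p2 y2 w -> intl x2 p2 y2 w' ->
  intl x3 p3 y3 w -> intl x3 p3 y3 w' ->
  intl x1 p1 y1 a -> intl x2 p2 y2 a -> ~~ intl x3 p3 y3 a ->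
  intl x1 p1 y1 b -> intl x3 p3 y3 b -> ~~ intl x2 p2 y2 b ->
  intl x2 p2 y2 c -> intl x3 p3 y3 c -> ~~ intl x1 p1 y1 c -> False.
Proof.
move=> G1 G2 G3 ww' W1 W1' W2 W2' W3 W3' Ia1 Ia2 Na3 Ib1 Ib3 Nb2 Ic2 Ic3 Nc1.
have S1 := core_one G1 G2 G3 ww' W1 W1' W2 W2' W3 W3' Ia1 Ia2 Na3 Ib1 Ib3 Nb2.
have S2 := core_one G2 G1 G3 ww' W2 W2' W1 W1' W3 W3' Ia2 Ia1 Na3 Ic2 Ic3 Nc1.
have S3 := core_one G3 G1 G2 ww' W3 W3' W1 W1' W2 W2' Ib3 Ib1 Nb2 Ic3 Ic2 Nc1.
tauto.
Qed.

End Core.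

Section Bridge.
Variables (V : finType) (e : rel V).

Lemma tuple_seq k (t : (k.+1).-tuple V) : (t : seq V) = thead t :: behead t.
Proof. by case: t => [[|a s] Ht] //=; rewrite /thead (tnth_nth a). Qed.

Lemma in_walks k u v (t : (k.+1).-tuple V) :
  t \in walks e k u v = (thead t == u) && wlk e u (behead t) v.
Proof.
by rewrite inE /wlk; case: (thead t =P u) => [->|].
Qed.

Lemma mk_walk k u v q (Hq : size q = k) : wlk e u q v ->
  exists t : (k.+1).-tuple V, t \in walks e k u v /\ (t : seq V) = u :: q.
Proof.
move=> W; have Hs : size (u :: q) == k.+1 by rewrite /= Hq.
exists (Tuple Hs); split => //.
by rewrite in_walks /thead (tnth_nth u) /= eqxx W.
Qed.

Lemma reachP k u v : reflect (exists q, wlk e u q v /\ size q = k) (reach_in e k u v).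
Proof.
apply: (iffP card_gt0P).
  move=> [t]; rewrite in_walks => /andP [_ W]; exists (behead t); split => //.
  by rewrite size_behead size_tuple.
by move=> [q [W Hq]]; have [t [Ht _]] := mk_walk Hq W; exists t.
Qed.

Lemma is_dist_uniq k k' u v : is_dist e k u v -> is_dist e k' u v -> k = k'.
Proof.
move=> /andP [R1 /forallP F1] /andP [R2 /forallP F2].
case: (ltngtP k k') => // H.
  by have := F2 (Ordinal H); rewrite R1.
by have := F1 (Ordinal H); rewrite R2.
Qed.

Lemma sigma_dist u v : sigma e u v = 1%N ->
  exists k : 'I_#|V|, is_dist e k u v /\ #|walks e k u v| = 1%N.
Proof.
rewrite /sigma.
case: (pickP (fun k : 'I_#|V| => (if is_dist e k u v then #|walks e k u v| else 0%N) != 0%N)) => [k Hk|H0]; last first.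
  by rewrite big1 // => k _; move: (H0 k) => /negbFE/eqP.
rewrite (bigD1 k) //= big1 ?addn0; last first.
  move=> k' Hk'; case: ifP => // Dk'.
  move: Hk; case: ifP => // Dk _.
  by move: Hk'; rewrite (ord_inj (is_dist_uniq Dk' Dk)) eqxx.
move: Hk; case: ifP => // Dk _ H1; exists k; split => //.
Qed.

Lemma sigma_geo u v : sigma e u v = 1%N ->
  exists p, Geo e u p v /\ (forall z, sigma_through e z u v = intl u p v z).
Proof.
move=> S1; have [k [Dk C1]] := sigma_dist S1.
have [t0 Et] := cards1P (introT eqP C1).
have Ht0 : t0 \in walks e k u v by rewrite Et set11.
move: (Ht0); rewrite in_walks => /andP [/eqP Hh W].
have Sz : size (behead t0) = k by rewrite size_behead size_tuple.
exists (behead t0); split.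
  split => // q Wq.
    rewrite Sz; case: (leqP k (size q)) => // Hlt.
    move: Dk => /andP [_ /forallP /(_ (Ordinal Hlt))] /= /reachP; case.
    by exists q.
  rewrite Sz => Hq; have [t [Ht Eq]] := mk_walk Hq Wq.
  move: Ht; rewrite Et inE => /eqP Ett.
  by move: Eq; rewrite Ett tuple_seq Hh => -[].
move=> z; rewrite /sigma_through (bigD1 k) //= big1 ?addn0; last first.
  by move=> k' Hk'; case: ifP => // Dk'; move: Hk'; rewrite (ord_inj (is_dist_uniq Dk' Dk)) eqxx.
rewrite Dk Et /intl -Hh -tuple_seq.
case: (boolP [&& z != thead t0, z != v & z \in (t0 : seq V)]) => Hc.
  rewrite (_ : [set _ in _ | _] = [set t0]) ?cards1 //.
  by apply/setP => t; rewrite !inE; case: eqP => // ->.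
rewrite (_ : [set _ in _ | _] = set0) ?cards0 //.
by apply/setP => t; rewrite !inE; case: eqP => // ->; rewrite (negbTE Hc).
Qed.

End Bridge.
From mathcomp Require Import classical_sets reals.
Import Order.TTheory GRing.Theory Num.Theory.
Local Open Scope ring_scope.
Local Open Scope classical_set_scope.

Lemma fourth (j1 j2 j3 : 'I_4) : exists j4 : 'I_4, [/\ j4 != j1, j4 != j2 & j4 != j3].
Proof.
case: (pickP (fun j4 : 'I_4 => [&& j4 != j1, j4 != j2 & j4 != j3])) => [j4 /and3P [? ? ?]|H].
  by exists j4.
have E4 : #|[:: j1; j2; j3]| = 4%N.
  rewrite -[RHS](card_ord 4); apply: eq_card => j.
  move: (H j) => /=; rewrite !inE.
  by case: (j == j1); case: (j == j2); case: (j == j3).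
by have := card_size [:: j1; j2; j3]; rewrite E4.
Qed.

Theorem lemma3 (R : realType) (V : finType) (e : rel V)
    (e_sym : symmetric e) (e_irr : irreflexive e) :
  ~ exists (u v : 'I_4 -> V) (x : 'I_4 -> R),
      injective (fun i => ((u i, v i), x i)) /\
      (forall i, u i != v i /\ 0 <= x i <= 1) /\
      shattered (Fplus (R := R) e) [set ((u i, v i), x i) | i in [set: 'I_4]] /\
      exists j1 j2 j3 : 'I_4,
        [/\ j1 != j2, j1 != j3 & j2 != j3] /\
        [/\ sigma e (u j1) (v j1) = 1%N,
             sigma e (u j2) (v j2) = 1%N &
             sigma e (u j3) (v j3) = 1%N].
Proof.
move=> [u [v [x [Inj [Hux [Sh [j1 [j2 [j3 [[n12 n13 n23] [S1 S2 S3]]]]]]]]]]].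
set B := [set ((u i, v i), x i) | i in [set: 'I_4]] in Sh.
have realize : forall S : set 'I_4, exists w, forall j, Rw e w ((u j, v j), x j) <-> S j.
  move=> S.
  have : [set A | A `<=` B] ((fun i => ((u i, v i), x i)) @` S).
    by move=> _ [i _ <-]; exists i.
  rewrite -Sh => -[_ [w _ <-] EA].
  exists w => j; split.
    move=> Hj; have : (Rw e w `&` B) ((u j, v j), x j) by split => //; exists j.
    by rewrite EA => -[i Si /Inj <-].
  move=> Sj; have : ((fun i => ((u i, v i), x i)) @` S) ((u j, v j), x j) by exists j.
  by rewrite -EA => -[].
have fwE : forall j p, sigma e (u j) (v j) = 1%N ->
    (forall z, sigma_through e z (u j) (v j) = intl (u j) p (v j) z) ->
    forall w, fw e R w (u j) (v j) = (intl (u j) p (v j) w)%:R.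
  by move=> j p Sj Mj w; rewrite /fw Sj Mj /= divr1.
have posx : forall j p, sigma e (u j) (v j) = 1%N ->
    (forall z, sigma_through e z (u j) (v j) = intl (u j) p (v j) z) -> 0 < x j.
  move=> j p Sj Mj; have [w0 Hw0] := realize set0.
  have [H1 H2] := Hux j.
  have NR : ~ (x j <= fw e R w0 (u j) (v j)).
    by move=> Hle; apply/(Hw0 j); split => //; split.
  move/negP: NR; rewrite -ltNge (fwE j p Sj Mj); apply: le_lt_trans.
  by case: intl.
have memR : forall j p, sigma e (u j) (v j) = 1%N ->
    (forall z, sigma_through e z (u j) (v j) = intl (u j) p (v j) z) ->
    forall w, (Rw e w ((u j, v j), x j) <-> intl (u j) p (v j) w).
  move=> j p Sj Mj w; have Px := posx j p Sj Mj.
  have [H1 /andP [H2 H3]] := Hux j.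
  rewrite /Rw /= (fwE j p Sj Mj); case: intl => /=; split => //.
    by move=> _; split => //; split => //; apply/andP.
  by move=> [_ [_]]; rewrite leNgt Px.
have [p1 [G1 M1]] := sigma_geo S1.
have [p2 [G2 M2]] := sigma_geo S2.
have [p3 [G3 M3]] := sigma_geo S3.
have R1 := memR j1 p1 S1 M1.
have R2 := memR j2 p2 S2 M2.
have R3 := memR j3 p3 S3 M3.
have [j4 [n41 n42 n43]] := fourth j1 j2 j3.
have [wA HA] := realize setT.
have [wB HB] := realize [set j | j != j4].
have [a Ha] := realize [set j | j = j1 \/ j = j2].
have [b Hb] := realize [set j | j = j1 \/ j = j3].
have [c Hc] := realize [set j | j = j2 \/ j = j3].
have ww' : wA != wB.
  apply/eqP => E; have := (HA j4).2 I; rewrite E => /(HB j4) /=.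
  by rewrite eqxx.
have WA1 := (R1 wA).1 ((HA j1).2 I).
have WA2 := (R2 wA).1 ((HA j2).2 I).
have WA3 := (R3 wA).1 ((HA j3).2 I).
have WB1 := (R1 wB).1 ((HB j1).2 (_ : j1 != j4)).
have {WB1}WB1 := WB1 (let H : j1 != j4 := ltac:(by rewrite eq_sym) in H).
have WB2 := (R2 wB).1 ((HB j2).2 (_ : j2 != j4)).
have {WB2}WB2 := WB2 (let H : j2 != j4 := ltac:(by rewrite eq_sym) in H).
have WB3 := (R3 wB).1 ((HB j3).2 (_ : j3 != j4)).
have {WB3}WB3 := WB3 (let H : j3 != j4 := ltac:(by rewrite eq_sym) in H).
have Ia1 := (R1 a).1 ((Ha j1).2 (or_introl erefl)).
have Ia2 := (R2 a).1 ((Ha j2).2 (or_intror erefl)).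
have Ib1 := (R1 b).1 ((Hb j1).2 (or_introl erefl)).
have Ib3 := (R3 b).1 ((Hb j3).2 (or_intror erefl)).
have Ic2 := (R2 c).1 ((Hc j2).2 (or_introl erefl)).
have Ic3 := (R3 c).1 ((Hc j3).2 (or_intror erefl)).
have Na3 : ~~ intl (u j3) p3 (v j3) a.
  apply/negP => H; have [] := (Ha j3).1 ((R3 a).2 H) => E.
    by rewrite E eqxx in n13.
  by rewrite E eqxx in n23.
have Nb2 : ~~ intl (u j2) p2 (v j2) b.
  apply/negP => H; have [] := (Hb j2).1 ((R2 b).2 H) => E.
    by rewrite E eqxx in n12.
  by rewrite E eqxx in n23.
have Nc1 : ~~ intl (u j1) p1 (v j1) c.
  apply/negP => H; have [] := (Hc j1).1 ((R1 c).2 H) => E.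
    by rewrite E eqxx in n12.
  by rewrite E eqxx in n13.
exact: (core e_sym G1 G2 G3 ww' WA1 WB1 WA2 WB2 WA3 WB3 Ia1 Ia2 Na3 Ib1 Ib3 Nb2 Ic2 Ic3 Nc1).
Qed.
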